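(* Let $s\ge2$ groups of positive integer moduli be given: Group $j$ ($1\le j\le s$) consists of $L_j\ge1$ moduli $0<M_{j,1}<\dots<M_{j,L_j}$; put $\delta_j=\operatorname{lcm}(M_{j,1},\dots,M_{j,L_j})$ and assume $\delta_1,\dots,\delta_s$ pairwise distinct. Let $N$ be an integer with $0\le N<\operatorname{lcm}(\delta_1,\dots,\delta_s)$, let $r_{j,i}$ be the remainder of $N$ modulo $M_{j,i}$ and $n_{j,i}=(N-r_{j,i})/M_{j,i}$. Let $\tilde r_{j,i}$ be integers with $0\le\tilde r_{j,i}\le M_{j,i}-1$ and $|\tilde r_{j,i}-r_{j,i}|\le\tau_j$ for all $i,j$, where $$\tau_j<\min(G_j,G)\quad(1\le j\le s),$$ with $G_j=\max_{1\le i\le L_j}\min_{q\ne i}\gcd(M_{j,i},M_{j,q})/4$ if $L_j\ge2$, $G_j=M_{j,1}/4$ if $L_j=1$, and $G=\max_{1\le i\le s}\min_{q\ne i}\gcd(\delta_i,\delta_q)/4$. Then the two-stage algorithm (described in the context) outputs $\hat n_{j,i}=n_{j,i}$ for all $i,j$, and its estimate $$\hat N=\left[\frac1{\sum_{j=1}^sL_j}\sum_{j=1}^s\sum_{i=1}^{L_j}(\hat n_{j,i}M_{j,i}+\tilde r_{j,i})\right]$$ satisfies $|\hat N-N|\le\left[\frac{\sum_{j=1}^sL_j\tau_j}{\sum_{j=1}^sL_j}\right]$.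
   Context: For $x\in\mathbb R$, $[x]$ denotes the unique integer with $-1/2\le x-[x]<1/2$. Single-stage algorithm $\mathcal A$: for pairwise distinct positive integers $P_1,\dots,P_m$ ($m\ge2$), a reference index $k$ and integers $x_1,\dots,x_m$: for $i\ne k$ put $m_{ki}=\gcd(P_k,P_i)$, $\Gamma_{ki}=P_k/m_{ki}$, $\Gamma_{ik}=P_i/m_{ki}$, $\hat q_{ik}=[(x_i-x_k)/m_{ki}]$, let $\bar\Gamma_{ki}$ be an inverse of $\Gamma_{ki}$ modulo $\Gamma_{ik}$ and $\hat\xi_{ik}\equiv\hat q_{ik}\bar\Gamma_{ki}\pmod{\Gamma_{ik}}$, $0\le\hat\xi_{ik}<\Gamma_{ik}$; let $\hat n_k$ be the least nonnegative $y$ with $y\equiv\hat\xi_{ik}\pmod{\Gamma_{ik}}$ for all $i\ne k$ (the algorithm fails if none exists), and $\hat n_i=(\hat n_k\Gamma_{ki}-\hat q_{ik})/\Gamma_{ik}$ for $i\ne k$. Two-stage algorithm: Stage 1: for each group $j$, if $L_j\ge2$ apply $\mathcal A$ to $M_{j,1},\dots,M_{j,L_j}$ with inputs $\tilde r_{j,1},\dots,\tilde r_{j,L_j}$ and a reference index attaining $\max_i\min_{q\ne i}\gcd(M_{j,i},M_{j,q})$, obtaining $\hat K_{j,1},\dots,\hat K_{j,L_j}$; if $L_j=1$ set $\hat K_{j,1}=0$. Put $\hat N_j=[\frac1{L_j}\sum_{i=1}^{L_j}(\hat K_{j,i}M_{j,i}+\tilde r_{j,i})]$. Stage 2: apply $\mathcal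 A$ to the moduli $\delta_1,\dots,\delta_s$ with inputs $\hat N_1,\dots,\hat N_s$ and a reference index attaining $\max_i\min_{q\ne i}\gcd(\delta_i,\delta_q)$, obtaining $\hat l_1,\dots,\hat l_s$. Output $\hat n_{j,i}=\hat l_j\delta_j/M_{j,i}+\hat K_{j,i}$. *)

(* Defs.v *)
From Stdlib Require Import ClassicalEpsilon.
From mathcomp Require Import all_boot all_order all_algebra.
Set Implicit Arguments. Unset Strict Implicit. Unset Printing Implicit Defensive.
Import Order.TTheory GRing.Theory Num.Theory.
Local Open Scope ring_scope.

(* [x] : the unique integer with -1/2 <= x - [x] < 1/2, i.e. floor (x + 1/2). *)
Definition round {R : archiRealFieldType} (x : R) : int := Num.floor (x + 2^-1).

(* min_{q <> i, q < m} gcd(P_i, P_q)  (indices 0-based; default P i is harmless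
   because every gcd(P_i,P_q) <= P_i when P_i > 0, and the range is nonempty for m >= 2) *)
Definition mingcd (m : nat) (P : nat -> nat) (i : nat) : nat :=
  \big[minn/P i]_(q < m | (q : nat) != i) gcdn (P i) (P q).

Definition maxmingcd (m : nat) (P : nat -> nat) : nat :=
  (\max_(i < m) mingcd m P i)%N.

Definition least_nat (p : pred nat) : option nat :=
  match excluded_middle_informative (exists y, p y) with
  | left h => Some (ex_minn h)
  | right _ => None
  end.

Section SingleStage.
Variables (m : nat) (P : nat -> nat) (k : nat) (x : nat -> int).

Definition A_m (i : nat) : nat := gcdn (P k) (P i).
Definition A_Gki (i : nat) : nat := (P k %/ A_m i)%N.
Definition A_Gik (i : nat) : nat := (P i %/ A_m i)%N.
Definition A_q (i : nat) : int :=
  round (((x i - x k)%:~R / (A_m i)%:R) : rat).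
(* an inverse of Gamma_{ki} modulo Gamma_{ik} (Bezout coefficient) *)
Definition A_Gbar (i : nat) : nat := (egcdn (A_Gki i) (A_Gik i)).1.
Definition A_xi (i : nat) : int :=
  ((A_q i * (A_Gbar i)%:Z) %% (A_Gik i)%:Z)%Z.

Definition A_congr (y : nat) : bool :=
  all (fun i => (i == k) || (y%:Z == A_xi i %[mod (A_Gik i)%:Z])%Z) (iota 0 m).

(* output hat n_1 .. hat n_m (as a function on indices 0..m-1), or None = failure *)
Definition algA : option (nat -> int) :=
  match least_nat A_congr with
  | Some nk => Some (fun i => if i == k then nk%:Z
                     else ((nk%:Z * (A_Gki i)%:Z - A_q i) %/ (A_Gik i)%:Z)%Z)
  | None => None
  end.
End SingleStage.

Section TwoStage.
(* s groups; group j (0 <= j < s) has L j moduli M j 0 < ... < M j (L j - 1);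
   rt j i are the erroneous remainders; kr j is the stage-1 reference index
   of group j, k0 the stage-2 reference index. *)
Variables (s : nat) (L : nat -> nat) (M : nat -> nat -> nat)
  (rt : nat -> nat -> int) (kr : nat -> nat) (k0 : nat).

Definition delta (j : nat) : nat := (\big[lcmn/1]_(i < L j) M j i)%N.

Definition stage1 (j : nat) : option (nat -> int) :=
  if (2 <= L j)%N then algA (L j) (M j) (kr j) (rt j) else Some (fun _ => 0).

Definition Khat (j : nat) : nat -> int := odflt (fun _ => 0) (stage1 j).

Definition Nhat_group (j : nat) : int :=
  round ((L j)%:R^-1 * \sum_(i < L j) ((Khat j i * (M j i)%:Z + rt j i)%:~R) : rat).

Definition two_stage : option (nat -> nat -> int) :=
  if all (fun j => isSome (stage1 j)) (iota 0 s) then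
    match algA s delta k0 Nhat_group with
    | Some lhat => Some (fun j i => lhat j * ((delta j %/ M j i)%N)%:Z + Khat j i)
    | None => None
    end
  else None.

Definition Nhat_final (nh : nat -> nat -> int) : int :=
  round (((\sum_(j < s) L j)%N%:R^-1 *
          \sum_(j < s) \sum_(i < L j) ((nh j i * (M j i)%:Z + rt j i)%:~R)) : rat).
End TwoStage.

(* Main.v *)
From Stdlib Require Import ClassicalEpsilon.
Require Import Defs.
From mathcomp Require Import all_boot all_order all_algebra.
From mathcomp Require Import zify ring lra.
Import Order.TTheory GRing.Theory Num.Theory.
Local Open Scope ring_scope.

Lemma round_eq (F : archiRealFieldType) (x : F) (z : int) :
  z%:~R - 2^-1 <= x -> x < z%:~R + 2^-1 -> round x = z.
Proof.
move=> h1 h2; rewrite /round; apply: floor_def; rewrite intrD.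
apply/andP; split; lra.
Qed.

Lemma round_itv (F : archiRealFieldType) (x : F) :
  (round x)%:~R - 2^-1 <= x /\ x < (round x)%:~R + 2^-1.
Proof.
rewrite /round; have /andP[h1 h2] := floor_itv (x + 2^-1).
rewrite intrD in h2; split; lra.
Qed.

Lemma round_le (F : archiRealFieldType) (x y : F) : x <= y -> round x <= round y.
Proof. by move=> h; rewrite /round; apply: le_floor; rewrite lerD2r. Qed.

Lemma round_int (F : archiRealFieldType) (z : int) : round (z%:~R : F) = z.
Proof. by apply: round_eq; lra. Qed.

Lemma round_avg (n : nat) (Y : int) (e : 'I_n -> int) (c : int) : (0 < n)%N ->
  (forall i, `|e i| <= c) ->
  `|round ((n%:R^-1 * \sum_(i < n) (Y + e i)%:~R) : rat) - Y| <= c.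
Proof.
move=> n0 he.
have nR : (0 : rat) < n%:R by rewrite ltr0n.
have -> : (n%:R^-1 * \sum_(i < n) (Y + e i)%:~R : rat) =
          Y%:~R + n%:R^-1 * \sum_(i < n) (e i)%:~R.
  rewrite (eq_bigr (fun i => Y%:~R + (e i)%:~R)); last by move=> i _; rewrite intrD.
  rewrite big_split /= sumr_const card_ord mulrDr -[Y%:~R *+ n]mulr_natr mulrCA mulVf ?mulr1 //.
  by rewrite pnatr_eq0 -lt0n.
set a := _ * _.
have ha : `|a| <= c%:~R.
  rewrite /a normrM ger0_norm ?invr_ge0 ?ler0n // ler_pdivrMl //.
  have hs : \sum_(i < n) `|((e i)%:~R : rat)| <= \sum_(i < n) (c%:~R : rat).
    by apply: ler_sum => i _; rewrite -intr_norm ler_int.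
  apply: le_trans (ler_norm_sum _ _ _) _.
  apply: le_trans hs _.
  by rewrite sumr_const card_ord mulr_natl.
move: ha; rewrite ler_norml => /andP[h1 h2].
have r1 : round (Y%:~R + a) <= round (Y%:~R + c%:~R : rat) by apply: round_le; rewrite lerD2l.
have r2 : round (Y%:~R + - c%:~R : rat) <= round (Y%:~R + a) by apply: round_le; rewrite lerD2l.
rewrite -intrD round_int in r1; rewrite -intrN -intrD round_int in r2.
rewrite ler_norml; apply/andP; split; lia.
Qed.

Lemma round_final (R : archiRealFieldType) (S : nat) (N T : int) (b : R) : (0 < S)%N ->
  `|T|%:~R <= b * S%:R ->
  `|round ((S%:R^-1 * (S%:R * N%:~R + T%:~R)) : rat) - N| <= round b.
Proof.
move=> S0 hT.
have SR : (0:rat) < S%:R by rewrite ltr0n.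
have SR' : (0:R) < S%:R by rewrite ltr0n.
have -> : (S%:R^-1 * (S%:R * N%:~R + T%:~R) : rat) = N%:~R + T%:~R / S%:R.
  by field; rewrite pnatr_eq0 -lt0n.
set z := round _.
have [h1 h2] := @round_itv rat (N%:~R + T%:~R / S%:R); rewrite -/z in h1 h2.
rewrite -(ler_rat R) in h1; rewrite -(ltr_rat R) in h2.
rewrite !rmorphD /= rmorphN fmorph_div fmorphV /= !ratr_int ratr_nat in h1 h2.
have hq : `|(T%:~R / S%:R : R)| <= b.
  by rewrite normrM normfV normr_nat ler_pdivrMr // -intr_norm.
move: hq; rewrite ler_norml => /andP[hq1 hq2].
rewrite /round ler_norml lerNl; apply/andP; split; rewrite floor_ge_int ?intrN intrB; lra.
Qed.
Lemma coprime_divgcd (a b : nat) : (0 < a)%N -> gcdn (a %/ gcdn a b) (b %/ gcdn a b) = 1%N.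
Proof.
move=> a0; have g0 : (0 < gcdn a b)%N by rewrite gcdn_gt0 a0.
apply/eqP; rewrite -(eqn_pmul2l g0) muln1 muln_gcdr (mulnC _ (a %/ _)%N) (mulnC _ (b %/ _)%N).
rewrite !divnK ?dvdn_gcdl ?dvdn_gcdr //.
Qed.
Lemma Aq_correct (P : nat -> nat) (k : nat) (x : nat -> int) (Y : nat) (e : nat -> int) i :
  (0 < P k)%N ->
  x i = (Y %% P i)%N%:Z + e i -> x k = (Y %% P k)%N%:Z + e k ->
  2 * `|e i - e k| < (gcdn (P k) (P i))%:Z ->
  A_q P k x i = ((Y %/ P k) * A_Gki P k i)%N%:Z - ((Y %/ P i) * A_Gik P k i)%N%:Z.
Proof.
move=> Pk0 xi xk he.
rewrite /A_q.
set g := A_m P k i.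
have g0 : (0 < g)%N by rewrite /g /A_m gcdn_gt0 Pk0.
have gPk : (A_Gki P k i * g = P k)%N by rewrite /A_Gki divnK // /g /A_m dvdn_gcdl.
have gPi : (A_Gik P k i * g = P i)%N by rewrite /A_Gik divnK // /g /A_m dvdn_gcdr.
have Ri : (Y %% P i)%N%:Z = Y%:Z - ((Y %/ P i) * A_Gik P k i)%N%:Z * g%:Z.
  rewrite -PoszM -mulnA gPi {2}(divn_eq Y (P i)) PoszD; lia.
have Rk : (Y %% P k)%N%:Z = Y%:Z - ((Y %/ P k) * A_Gki P k i)%N%:Z * g%:Z.
  by rewrite -PoszM -mulnA gPk {2}(divn_eq Y (P k)) PoszD; lia.
set z := ((Y %/ P k * A_Gki P k i)%N%:Z - (Y %/ P i * A_Gik P k i)%N%:Z).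
have key : x i - x k = z * g%:Z + (e i - e k).
  rewrite xi xk Ri Rk /z; ring.
rewrite key.
have hd : - (g%:Z) < 2 * (e i - e k) < g%:Z.
  move: he; rewrite /g /A_m; lia.
case/andP: hd => hd1 hd2.
have gR : (0 : rat) < g%:R by rewrite ltr0n.
have h1 : ((- g%:Z)%:~R : rat) < (2 * (e i - e k))%:~R by rewrite ltr_int.
have h2 : ((2 * (e i - e k))%:~R : rat) < (g%:Z)%:~R by rewrite ltr_int.
move: h1 h2; rewrite intrN !intrM /=.
set d := ((e i - e k)%:~R : rat).
have -> : ((z * g + (e i - e k))%:~R : rat) = z%:~R * g%:R + d by rewrite intrD intrM.
have -> : (z%:~R * g%:R + d) / g%:R = z%:~R + d / g%:R :> rat.
  by field; rewrite pnatr_eq0 -lt0n.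
move=> h1 h2.
have h3 : - (2^-1) < d / g%:R < 2^-1.
  by rewrite ltr_pdivrMr // ltr_pdivlMr //; apply/andP; split; lra.
case/andP: h3 => h3 h4.
apply: round_eq; lra.
Qed.
Lemma Axi_dvd (P : nat -> nat) k (x : nat -> int) i (nk ni : nat) : (0 < P k)%N ->
  A_q P k x i = (nk * A_Gki P k i)%N%:Z - (ni * A_Gik P k i)%N%:Z ->
  ((A_Gik P k i)%:Z %| nk%:Z - A_xi P k x i)%Z.
Proof.
move=> Pk0 Hq.
have g0 : (0 < A_m P k i)%N by rewrite /A_m gcdn_gt0 Pk0.
have a0 : (0 < A_Gki P k i)%N.
  by rewrite /A_Gki divn_gt0 // dvdn_leq // /A_m dvdn_gcdl.
have cop : gcdn (A_Gki P k i) (A_Gik P k i) = 1%N by apply: coprime_divgcd.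
rewrite /A_xi /A_Gbar.
case: (egcdnP (A_Gik P k i) a0) => u v Huv _.
rewrite cop in Huv.
rewrite Hq /=.
set a := A_Gki P k i in Huv *; set b := A_Gik P k i in Huv *.
set w := (_ * _)%R.
have Ew := divz_eq w b.
apply/dvdzP; exists (ni%:Z * u%:Z - nk%:Z * v%:Z + (w %/ b)%Z).
have Huv' : u%:Z * a%:Z = v%:Z * b%:Z + 1 by rewrite -!PoszM Huv PoszD.
have Hw : w = (nk%:Z * a%:Z - ni%:Z * b%:Z) * u%:Z by rewrite /w !PoszM.
have -> : (w %% b)%Z = w - (w %/ b)%Z * b by rewrite {2}Ew; ring.
rewrite Hw.
apply/eqP; rewrite -subr_eq0; apply/eqP.
transitivity (nk%:Z * (v%:Z * b%:Z + 1 - u%:Z * a%:Z)); first by ring.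
by rewrite Huv'; ring.
Qed.

Lemma A_correct (m : nat) (P : nat -> nat) (k : nat) (x : nat -> int) (Y : nat) (e : nat -> int) :
  (k < m)%N -> (forall i, (i < m)%N -> (0 < P i)%N) ->
  (Y < \big[lcmn/1%N]_(i < m) P i)%N ->
  (forall i, (i < m)%N -> x i = (Y %% P i)%N%:Z + e i) ->
  (forall i, (i < m)%N -> i != k -> 2 * `|e i - e k| < (gcdn (P k) (P i))%:Z) ->
  exists f, algA m P k x = Some f /\ forall i, (i < m)%N -> f i = (Y %/ P i)%N%:Z.
Proof.
move=> km Ppos YD xE eE.
have Pk0 := Ppos k km.
have Hq i : (i < m)%N -> i != k -> A_q P k x i =
   ((Y %/ P k) * A_Gki P k i)%N%:Z - ((Y %/ P i) * A_Gik P k i)%N%:Z.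
  by move=> im ik; apply: (@Aq_correct P k x Y e i) => //; [exact: xE|exact: xE|exact: eE].
have Hd i : (i < m)%N -> i != k -> ((A_Gik P k i)%:Z %| (Y %/ P k)%N%:Z - A_xi P k x i)%Z.
  by move=> im ik; apply: Axi_dvd => //; exact: Hq.
have Cnk : A_congr m P k x (Y %/ P k).
  apply/allP => i; rewrite mem_iota add0n => /andP[_ im].
  case: eqP => //= /eqP ik; rewrite eqz_mod_dvd; exact: Hd.
rewrite /algA /least_nat; case: excluded_middle_informative => [h|h]; last first.
  by exfalso; apply: h; exists (Y %/ P k)%N.
case: ex_minnP => y0 Hy0 Hmin.
have le := Hmin _ Cnk.
have Ey : y0 = (Y %/ P k)%N.
  set nk := (Y %/ P k)%N in le Hd Cnk *.
  suff: (nk - y0)%N = 0%N by lia.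
  set d := (nk - y0)%N.
  have Dd : (\big[lcmn/1%N]_(i < m) P i %| d * P k)%N.
    apply/dvdn_biglcmP => i _.
    case: (eqVneq (val i) k) => [<-|ik]; first by apply: dvdn_mull.
    have im := ltn_ord i.
    have hy0 : ((A_Gik P k i)%:Z %| y0%:Z - A_xi P k x i)%Z.
      move/allP: Hy0 => /(_ (val i)); rewrite mem_iota add0n im /= (negbTE ik) /=.
      by rewrite eqz_mod_dvd; apply.
    have := rpredB (Hd _ im ik) hy0.
    rewrite (_ : _ - _ - _ = d%:Z); last by rewrite /d; lia.
    rewrite dvdzE /= => hGd.
    have gPk : (A_Gki P k i * A_m P k i = P k)%N by rewrite /A_Gki divnK // /A_m dvdn_gcdl.
    have gPi : (A_Gik P k i * A_m P k i = P i)%N.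
      by rewrite /A_Gik divnK // /A_m dvdn_gcdr.
    apply: (@dvdn_trans (d * A_m P k i)); first by rewrite -{1}gPi dvdn_mul.
    by rewrite dvdn_mul // /A_m dvdn_gcdl.
  case: (posnP d) => // d0; exfalso.
  have p0 : (0 < d * P k)%N by rewrite muln_gt0 d0.
  have h1 : (d * P k <= Y)%N.
    apply: leq_trans (leq_divM Y (P k)).
    by rewrite leq_mul2r leq_subr orbT.
  have := leq_trans (dvdn_leq p0 Dd) h1.
  by move: YD; rewrite ltnNge => /negP.
eexists; split; first reflexivity.
move=> i im /=; case: (eqVneq i k) => [->|ik]; first by rewrite Ey.
rewrite Ey Hq //.
have gPi : (A_Gik P k i * A_m P k i = P i)%N.
  by rewrite /A_Gik divnK // /A_m dvdn_gcdr.
have b0 : (A_Gik P k i)%:Z != 0.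
  apply/eqP => /eqP; rewrite eqz_nat => /eqP h0.
  by move: (Ppos i im); rewrite -gPi h0.
rewrite (_ : _ - _ = (Y %/ P i)%N%:Z * (A_Gik P k i)%:Z); last by rewrite PoszM; ring.
by rewrite mulzK.
Qed.

Lemma mingcd_le m P k i : (i < m)%N -> i != k -> (mingcd m P k <= gcdn (P k) (P i))%N.
Proof.
move=> im ik; rewrite /mingcd.
move: (mem_index_enum (Ordinal im)); elim: (index_enum _) => [|j r IH] //.
rewrite inE big_cons => /orP[/eqP <-|/IH h].
  by rewrite /= ik geq_minl.
by case: ifP => _ //; exact: leq_trans (geq_minr _ _) h.
Qed.

Lemma biglcm_gt0 (m : nat) (F : 'I_m -> nat) : (forall i : 'I_m, 0 < F i)%N ->
  (0 < \big[lcmn/1%N]_(i < m) F i)%N.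
Proof.
move=> h; apply: (big_ind (fun x => 0 < x)%N) => //.
by move=> a b ha hb; rewrite lcmn_gt0 ha hb.
Qed.

Lemma two_bound (R : archiRealFieldType) (a b : int) (t1 t2 : R) (g : nat) :
  `|a|%:~R <= t1 -> `|b|%:~R <= t2 -> t1 < g%:R / 4 -> t2 < g%:R / 4 ->
  2 * `|a - b| < g%:Z.
Proof.
move=> ha hb h1 h2.
rewrite -(ltr_int R) intrM intr_norm.
have hn : `|(a - b)%:~R : R| <= `|a%:~R| + `|b%:~R| by rewrite intrB; exact: ler_normB.
rewrite intr_norm in ha; rewrite intr_norm in hb.
have -> : ((g%:Z)%:~R : R) = g%:R by [].
have -> : (2%:~R : R) = 2 by [].
lra.
Qed.

Lemma div_split N d M : (0 < M)%N -> (M %| d)%N ->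
  (N %/ d * (d %/ M) + (N %% d) %/ M = (N - N %% M) %/ M)%N.
Proof.
move=> M0 Md.
have -> : ((N - N %% M) %/ M = N %/ M)%N by rewrite {1}(divn_eq N M) addnK mulnK.
rewrite {3}(divn_eq N d) -[in RHS](divnK Md) mulnA divnMDl // divnK //.
Qed.

Theorem theorem3 (R : archiRealFieldType) (s : nat) (L : nat -> nat) (M : nat -> nat -> nat)
  (N : nat) (rt : nat -> nat -> int) (tau : nat -> R) (kr : nat -> nat) (k0 : nat) :
  (2 <= s)%N ->
  (forall j, (j < s)%N -> (1 <= L j)%N) ->
  (forall j i, (j < s)%N -> (i < L j)%N -> (0 < M j i)%N) ->
  (forall j i, (j < s)%N -> (i.+1 < L j)%N -> (M j i < M j i.+1)%N) ->
  (forall j1 j2, (j1 < s)%N -> (j2 < s)%N -> j1 != j2 -> delta L M j1 != delta L M j2) ->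
  (N < \big[lcmn/1%N]_(j < s) delta L M j)%N ->
  (forall j i, (j < s)%N -> (i < L j)%N ->
     0 <= rt j i <= (M j i)%:Z - 1 /\
     `|(rt j i - (N %% M j i)%N%:Z)%:~R| <= tau j) ->
  (forall j, (j < s)%N ->
     tau j < (if (2 <= L j)%N then (maxmingcd (L j) (M j))%:R / 4
              else (M j 0%N)%:R / 4)
     /\ tau j < (maxmingcd s (delta L M))%:R / 4) ->
  (* stage-1 reference indices attain max_i min_{q<>i} gcd *)
  (forall j, (j < s)%N -> (2 <= L j)%N ->
     (kr j < L j)%N /\ mingcd (L j) (M j) (kr j) = maxmingcd (L j) (M j)) ->
  (* stage-2 reference index attains max_i min_{q<>i} gcd *)
  (k0 < s)%N -> mingcd s (delta L M) k0 = maxmingcd s (delta L M) ->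
  exists nh : nat -> nat -> int,
    two_stage s L M rt kr k0 = Some nh /\
    (forall j i, (j < s)%N -> (i < L j)%N ->
       nh j i = ((N - N %% M j i) %/ M j i)%N%:Z) /\
    `|Nhat_final s L M rt nh - N%:Z| <=
      round ((\sum_(j < s) (L j)%:R * tau j) / (\sum_(j < s) L j)%N%:R).
Proof.
move=> s2 L1 Mpos _ _ Nlt Hrt Htau Hkr k0s Hk0.
have dpos j : (j < s)%N -> (0 < delta L M j)%N.
  by move=> js; rewrite /delta; apply: biglcm_gt0 => i; apply: Mpos.
have Mdvd j i : (j < s)%N -> (i < L j)%N -> (M j i %| delta L M j)%N.
  by move=> js iL; rewrite /delta; apply: (biglcmn_sup (Ordinal iL)).
pose e j i := rt j i - (N %% M j i)%N%:Z.
have He j i : (j < s)%N -> (i < L j)%N ->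
    rt j i = ((N %% delta L M j) %% M j i)%N%:Z + e j i.
  by move=> js iL; rewrite (modn_dvdm N (Mdvd j i js iL)) /e addrC subrK.
have Hst1 j : (j < s)%N -> exists K, stage1 L M rt kr j = Some K /\
    forall i, (i < L j)%N -> K i = ((N %% delta L M j) %/ M j i)%N%:Z.
  move=> js; rewrite /stage1; case: ifP => L2.
    have [krL Hm] := Hkr j js L2.
    apply: (@A_correct (L j) (M j) (kr j) (rt j) (N %% delta L M j) (e j)) => //.
    - by move=> i; apply: Mpos.
    - exact: (ltn_pmod _ (dpos j js)).
    - by move=> i; apply: He.
    move=> i iL ik.
    have [t1 _] := Htau j js; rewrite L2 -Hm in t1.
    have hg : ((mingcd (L j) (M j) (kr j))%:R : R) <= (gcdn (M j (kr j)) (M j i))%:R.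
      by rewrite ler_nat; apply: mingcd_le.
    apply: (@two_bound R _ _ (tau j) (tau j)).
    - by rewrite intr_norm; exact: (Hrt j i js iL).2.
    - by rewrite intr_norm; exact: (Hrt j (kr j) js krL).2.
    - lra.
    - lra.
  have L1' : L j = 1%N by move: (L1 j js) L2; lia.
  exists (fun _ => 0); split => // i iL.
  have i0 : i = 0%N by move: iL; rewrite L1'; lia.
  rewrite i0 divn_small // (_ : delta L M j = M j 0%N) ?ltn_pmod //.
    by apply: Mpos; rewrite // L1'.
  by rewrite /delta L1' big_ord1.
have HK j i : (j < s)%N -> (i < L j)%N ->
    Khat L M rt kr j i = ((N %% delta L M j) %/ M j i)%N%:Z.
  by move=> js iL; rewrite /Khat; have [K [-> HK]] := Hst1 j js; exact: HK.
pose E j := Nhat_group L M rt kr j - (N %% delta L M j)%N%:Z.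
have HE j : (j < s)%N -> `|E j| <= Num.floor (tau j).
  move=> js; rewrite /E /Nhat_group.
  rewrite (eq_bigr (fun i : 'I_(L j) => ((N %% delta L M j)%N%:Z + e j i)%:~R)); last first.
    move=> i _; congr (_%:~R).
    rewrite HK // (He j i js (ltn_ord i)) -PoszM addrA -PoszD -divn_eq //.
  apply: round_avg; first exact: L1.
  move=> i; rewrite floor_ge_int intr_norm; exact: (Hrt j i js (ltn_ord i)).2.
have [lh [Hlh Hlhv]] : exists f, algA s (delta L M) k0 (Nhat_group L M rt kr) = Some f /\
    forall j, (j < s)%N -> f j = (N %/ delta L M j)%N%:Z.
  apply: (@A_correct s (delta L M) k0 _ N E) => //.
  - by move=> j /= js; rewrite /E addrC subrK.
  move=> j js jk.
  have [_ t1] := Htau j js; have [_ t2] := Htau k0 k0s; rewrite -Hk0 in t1 t2.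
  have hg : ((mingcd s (delta L M) k0)%:R : R) <= (gcdn (delta L M k0) (delta L M j))%:R.
    by rewrite ler_nat; apply: mingcd_le.
  apply: (@two_bound R _ _ (tau j) (tau k0)).
  - by rewrite -floor_ge_int; exact: HE.
  - by rewrite -floor_ge_int; exact: HE.
  - lra.
  - lra.
have Hall : all (fun j => isSome (stage1 L M rt kr j)) (iota 0 s).
  apply/allP => j; rewrite mem_iota add0n => /andP[_ js].
  by have [K [-> _]] := Hst1 j js.
have Hnh j i : (j < s)%N -> (i < L j)%N ->
    lh j * ((delta L M j %/ M j i)%N)%:Z + Khat L M rt kr j i = ((N - N %% M j i) %/ M j i)%N%:Z.
  move=> js iL; rewrite Hlhv // HK // -PoszM -PoszD div_split //.
    exact: Mpos.
  exact: Mdvd.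
eexists; split.
  by rewrite /two_stage Hall Hlh.
split; first by move=> j i js iL; exact: Hnh.
set S := (\sum_(j < s) L j)%N.
pose T := \sum_(j < s) \sum_(i < L j) e j i.
have S0 : (0 < S)%N.
  rewrite /S (bigD1 (Ordinal (ltn_trans (ltnSn 0) s2))) //=.
  by have := L1 0%N (ltn_trans (ltnSn 0) s2); lia.
rewrite /Nhat_final /=.
rewrite (_ : \sum_(j < s) \sum_(i < L j) _ = S%:R * N%:~R + T%:~R); last first.
  rewrite /S natr_sum /T rmorph_sum mulr_suml -big_split; apply: eq_bigr => j _.
  rewrite rmorph_sum /= mulr_natl.
  have -> : (N%:~R *+ L j : rat) = \sum_(i < L j) N%:~R by rewrite sumr_const card_ord.
  rewrite -big_split.
  apply: eq_bigr => i _; transitivity (((N%:Z + e j i)%:~R : rat)); last by rewrite intrD.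
  congr (_%:~R).
  have js := ltn_ord j; have iL := ltn_ord i.
  rewrite Hnh //.
  have hN : ((N - N %% M j i) %/ M j i * M j i + N %% M j i = N)%N.
    by rewrite {1}(divn_eq N (M j i)) addnK mulnK ?Mpos // -divn_eq.
  rewrite -PoszM /e; lia.
apply: round_final => //.
have SR : (0 : R) < S%:R by rewrite ltr0n.
rewrite divfK; last by rewrite pnatr_eq0 -lt0n.
rewrite intr_norm /T rmorph_sum.
apply: le_trans (ler_norm_sum _ _ _) _; apply: ler_sum => j _.
have js := ltn_ord j.
rewrite rmorph_sum; apply: le_trans (ler_norm_sum _ _ _) _.
have -> : (L j)%:R * tau j = \sum_(i < L j) tau j by rewrite sumr_const card_ord mulr_natl.
apply: ler_sum => i _.
exact: (Hrt j i js (ltn_ord i)).2.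
Qed.
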